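(* There is a constant $c$ such that for all sufficiently large $n$ and every integer $k>\frac{2}{3}n+c$, the pair $(n,k)$ is good.
   Context: All graphs are undirected and unweighted. For a graph $G=(V,E)$ and integer $k$, a $k$-spanner of $G$ is a subgraph $H=(V,E')$, $E'\subseteq E$, with $\mathrm{dist}_H(u,v)\le k\cdot\mathrm{dist}_G(u,v)$ for all $u,v\in V$. A minimum $k$-spanner is a $k$-spanner with the fewest edges. Girth = length of a shortest cycle ($+\infty$ if acyclic). A pair $(n,k)$ is good if for every $n$-vertex graph at least one of its minimum $k$-spanners has girth at least $k+2$. *)

(* Defs.v *)
From mathcomp Require Import all_boot all_order all_algebra.
Set Implicit Arguments. Unset Strict Implicit. Unset Printing Implicit Defensive.

(* A simple undirected graph on vertex set 'I_n is given by its edge set: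
   a set of 2-element subsets of 'I_n. *)
Definition graph (n : nat) := {set {set 'I_n}}.

Definition simple_graph n (E : graph n) : Prop :=
  forall e, e \in E -> #|e| = 2.

Definition adj n (E : graph n) : rel 'I_n := fun x y => [set x; y] \in E.

Definition walk_len n (E : graph n) (u v : 'I_n) (l : nat) : Prop :=
  exists s : seq 'I_n, [/\ path (adj E) u s, last u s = v & size s = l].

(* H is a k-spanner of G: a subgraph (same vertex set, subset of the edges)
   with dist_H(u,v) <= k * dist_G(u,v) for all u v, distances being the
   minimum length of a walk (+oo if none). *)
Definition spanner n (k : nat) (G H : graph n) : Prop :=
  H \subset G /\
  forall (u v : 'I_n) (d : nat), walk_len G u v d ->
    exists d', d' <= k * d /\ walk_len H u v d'.

Definition min_spanner n (k : nat) (G H : graph n) : Prop :=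
  spanner k G H /\ forall H', spanner k G H' -> #|H| <= #|H'|.

(* a cycle: a sequence of >= 3 pairwise distinct vertices, consecutive ones
   (cyclically) adjacent; its length is the number of vertices *)
Definition is_cycle n (E : graph n) (s : seq 'I_n) : Prop :=
  [/\ 3 <= size s, uniq s & cycle (adj E) s].

(* girth(E) >= g  (vacuous for acyclic graphs, girth = +oo) *)
Definition girth_ge n (E : graph n) (g : nat) : Prop :=
  forall s, is_cycle E s -> g <= size s.

Definition good (n k : nat) : Prop :=
  forall G : graph n, simple_graph G ->
    exists H : graph n, min_spanner k G H /\ girth_ge H k.+2.

(* Main.v *)
Require Import Defs.
From mathcomp Require Import all_boot all_order all_algebra.
From mathcomp Require Import zify.
From Stdlib Require Import Classical.
Set Implicit Arguments. Unset Strict Implicit. Unset Printing Implicit Defensive.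

Section G.
Variable n : nat.
Implicit Types (E F H G : graph n) (e f g : {set 'I_n}) (a b c p q u v x y : 'I_n) (s t : seq 'I_n).

Definition wk E a s b : bool := path (adj E) a s && (last a s == b).

Lemma adjC E p q : adj E p q = adj E q p.
Proof. by rewrite /adj setUC. Qed.

Lemma wk_nil E a : wk E a [::] a.
Proof. by rewrite /wk /= eqxx. Qed.

Lemma wk_edge E a b : adj E a b -> wk E a [:: b] b.
Proof. by move=> h; rewrite /wk /= h eqxx. Qed.

Lemma wk_cat E a s b t c : wk E a s b -> wk E b t c -> wk E a (s ++ t) c.
Proof.
rewrite /wk cat_path last_cat => /andP[p1 /eqP->] /andP[p2 l2].
by rewrite p1 p2.
Qed.

Lemma wk_sub E E' a s b : {subset E <= E'} -> wk E a s b -> wk E' a s b.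
Proof.
move=> sub /andP[p l]; rewrite /wk l andbT.
by apply: (sub_path _ p) => x y; rewrite /adj => /sub.
Qed.

Lemma wk_rev E a s b : wk E a s b ->
  exists s', [/\ wk E b s' a, size s' = size s & b :: s' =i a :: s].
Proof.
case/andP => p /eqP <-; exists (rev (belast a s)).
have hr : last a s :: rev (belast a s) = rev (a :: s) by rewrite [in RHS]lastI rev_rcons.
split.
- apply/andP; split.
    rewrite rev_path; erewrite eq_path; first exact: p.
    by move=> z w /=; rewrite adjC.
  apply/eqP; rewrite -(last_cons a) hr rev_cons last_rcons //.
- by rewrite size_rev size_belast.
- by move=> z; rewrite hr mem_rev.
Qed.

Lemma wk_short E a s b : wk E a s b ->
  exists s', [/\ wk E a s' b, uniq (a :: s'), {subset s' <= s} & size s' <= size s].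
Proof.
case/andP => p /eqP <-; case: (shortenP p) => s' p' u' sub.
exists s'; split => //.
- by rewrite /wk p' eqxx.
- have : size (a :: s') <= size (a :: s).
    apply: uniq_leq_size => // z.
    by rewrite !inE => /orP[->//|/sub ->]; rewrite orbT.
  by [].
Qed.

Lemma path_avoid E g b a s : b \in g -> b \notin a :: s ->
  path (adj E) a s -> path (adj (E :\ g)) a s.
Proof.
move=> bg; elim: s a => //= c s IH a.
rewrite !inE negb_or => /andP[ba bcs] /andP[h1 h2].
rewrite IH // andbT /adj in_setD1; move: h1; rewrite /adj => ->; rewrite andbT.
apply/eqP => eq; move: bg; rewrite -eq !inE.
move: bcs; rewrite negb_or => /andP[bc _].
by rewrite (negbTE ba) (negbTE bc).
Qed.

Lemma path_split E g a s : path (adj E) a s ->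
  path (adj (E :\ g)) a s \/
  exists s1 c s2, [/\ s = s1 ++ c :: s2, path (adj (E :\ g)) a s1,
     [set last a s1; c] = g & path (adj E) c s2].
Proof.
elim: s a => [|c s IH] a /=; first by left.
case/andP => h1 h2.
case: (boolP ([set a; c] == g)) => hg.
  by right; exists [::], c, s; split => //; apply/eqP.
have h1' : adj (E :\ g) a c by rewrite /adj in_setD1 hg; exact: h1.
case: (IH c h2) => [h|[s1 [c' [s2 [-> p1 eq p2]]]]].
  by left; rewrite h1' h.
by right; exists (c :: s1), c', s2; split => //=; rewrite h1'.
Qed.

Definition conn E a b := exists s, wk E a s b.

Lemma conn_trans E a b c : conn E a b -> conn E b c -> conn E a c.
Proof. by move=> [s h1] [t h2]; exists (s ++ t); apply: wk_cat h1 h2. Qed.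

Lemma conn_sym E a b : conn E a b -> conn E b a.
Proof. by move=> [s h]; have [s' [h' _ _]] := wk_rev h; exists s'. Qed.

Lemma walk_lenE E a b l : walk_len E a b l <-> exists s, wk E a s b /\ size s = l.
Proof.
split.
  by move=> [s [p l' sz]]; exists s; rewrite /wk p l' eqxx.
by move=> [s [/andP[p /eqP l'] sz]]; exists s.
Qed.


Lemma spanner_of_edges k G H : H \subset G ->
  (forall p q, [set p; q] \in G -> exists s, wk H p s q /\ size s <= k) ->
  spanner k G H.
Proof.
move=> sub hE; split => // u v d /walk_lenE [s [/andP[ps /eqP ls] sz]].
elim: s u d ps ls sz => [|c s IH] u d /=.
  move=> _ <- <-; exists 0; split => //; apply/walk_lenE; exists [::].
  by rewrite wk_nil.
case/andP => h1 h2 ls sz.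
have [r [wr sr]] := hE u c h1.
have [d' [hd' /walk_lenE [s' [ws' ss']]]] := IH c (size s) h2 ls erefl.
exists (size r + d'); split.
  by rewrite -sz mulnS leq_add.
by apply/walk_lenE; exists (r ++ s'); split; [apply: wk_cat wr ws'|rewrite size_cat ss'].
Qed.

Lemma spanner_edge k G H p q : spanner k G H -> [set p; q] \in G ->
  exists s, wk H p s q /\ size s <= k.
Proof.
case=> _ h hpq.
have [d' [hd /walk_lenE [s [ws ss]]]] := h p q 1 (proj2 (walk_lenE _ _ _ _)
  (ex_intro _ [:: q] (conj (wk_edge hpq) erefl))).
by exists s; split => //; rewrite ss -(muln1 k).
Qed.

Lemma exists_min k G : 0 < k -> exists H, min_spanner k G H.
Proof.
move=> k0.
suff: forall m, (exists H, spanner k G H /\ #|H| <= m) -> exists H, min_spanner k G H.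
  apply; exists G; split => //; split => // u v d hw; exists d; split => //.
  by rewrite leq_pmull.
elim=> [|m IH] [H [sH cH]].
  exists H; split => // H' _; move: cH; rewrite leqn0 => /eqP ->; done.
case: (classic (exists H', spanner k G H' /\ #|H'| <= m)) => [h|h]; first exact: IH.
exists H; split => // H' sH'; apply: (leq_trans cH); rewrite ltnNge; apply/negP => c.
by apply: h; exists H'.
Qed.

Lemma first_hit E (P : pred 'I_n) a s b : wk E a s b -> P b ->
  exists s1 c, [/\ wk E a s1 c, P c & all (fun z : 'I_n => ~~ P z) (belast a s1)].
Proof.
elim: s a => [|d s IH] a.
  by move=> /andP[_ /eqP /= ->] Pb; exists [::], b; rewrite wk_nil.
case: (boolP (P a)) => Pa.
  by move=> _ _; exists [::], a; rewrite wk_nil.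
case/andP => /= /andP[h1 h2] l Pb.
have [s1 [c [w1 Pc al]]] := IH d (introT andP (conj h2 l)) Pb.
exists (d :: s1), c; split => //=; last by rewrite Pa.
by move: w1 => /andP[p1 l1]; rewrite /wk /= h1 p1.
Qed.

Lemma seg E x s i j : path (adj E) x s -> i <= j -> j <= size s ->
  exists r, [/\ wk E (nth x (x :: s) i) r (nth x (x :: s) j), size r = j - i
          & {subset (nth x (x :: s) i) :: r <= x :: s}].
Proof.
elim: s x i j => [|y s IH] x i j.
  move=> _ hij /=; rewrite leqn0 => /eqP j0; move: hij; rewrite j0 leqn0 => /eqP ->.
  by exists [::]; split => //=; rewrite ?wk_nil.
move=> /= /andP[h1 h2] hij hj.
case: i hij => [|i] hij.
  case: j hj hij => [|j] hj _.
    by exists [::]; rewrite wk_nil /=; split => // z; rewrite !inE => ->.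
  have [r [wr sr subr]] := IH y 0 j h2 (leq0n _) hj.
  exists (y :: r); split => /=.
  - move: wr => /andP[p l]; rewrite /wk /= h1 p /=.
    by rewrite (set_nth_default y)...
  - by rewrite sr !subn0.
  - move=> z; rewrite inE => /orP[/eqP->|]; first by rewrite mem_head.
    by move/subr => hz; rewrite inE hz orbT.
case: j hj hij => [|j] hj hij //.
have [r [wr sr subr]] := IH y i j h2 hij hj.
exists r; split => /=.
- by rewrite (@set_nth_default _ (y :: s) y x i (leq_ltn_trans (hij : i <= j) hj)) (@set_nth_default _ (y :: s) y x j hj).
- by rewrite sr subSS.
- move=> z; rewrite (@set_nth_default _ (y :: s) y x i (leq_ltn_trans (hij : i <= j) hj)) => /subr hz.
  by rewrite inE hz orbT.
Qed.

Lemma arc F u v pi i j : path (adj F) u pi -> last u pi = v ->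
  i <= size pi -> j <= size pi ->
  exists r, [/\ wk ([set u; v] |: F) (nth u (u :: pi) i) r (nth u (u :: pi) j),
     (size r).*2 <= (size pi).+1 & {subset (nth u (u :: pi) i) :: r <= u :: pi}].
Proof.
move=> hp hl.
wlog hij : i j / i <= j.
  move=> W hi hj; case: (leqP i j) => h; first exact: W.
  have [r [wr sr subr]] := W j i (ltnW h) hj hi.
  have [r' [wr' sr' mr']] := wk_rev wr.
  exists r'; split => //; first by rewrite sr'.
  by move=> z; rewrite mr'; apply: subr.
move=> hi hj.
set F' := [set u; v] |: F.
have sub : {subset F <= F'} by move=> z hz; rewrite /F' in_setU1 hz orbT.
case: (leqP ((j - i).*2) (size pi).+1) => hc.
  have [r [wr sr subr]] := seg hp hij hj.
  by exists r; split => //; [exact: wk_sub sub wr | rewrite sr].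
have [r1 [w1 s1 sub1]] := seg hp (leq0n i) hi.
have [r1' [w1' s1' m1']] := wk_rev w1.
have [r2 [w2 s2 sub2]] := seg hp hj (leqnn (size pi)).
have [r2' [w2' s2' m2']] := wk_rev w2.
have hv : nth u (u :: pi) (size pi) = v by rewrite -hl (last_nth u).
rewrite hv in w2' m2'.
exists (r1' ++ v :: r2'); split.
- apply: (wk_cat (wk_sub sub w1')).
  apply: (wk_cat (s := [:: v])); last exact: wk_sub sub w2'.
  by apply: wk_edge; rewrite /adj /F' setU11.
- rewrite size_cat /= s1' s2' s1 s2; lia.
- move=> z; rewrite inE mem_cat inE => /orP[/eqP->|/orP[hz|/orP[/eqP->|hz]]].
  + by apply: sub1; rewrite -m1' mem_head.
  + by apply: sub1; rewrite -m1' inE hz orbT.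
  + by rewrite -hl mem_last.
  + by apply: sub2; rewrite -m2' inE hz orbT.
Qed.

Lemma arith_aux (k a0 b0 c0 d0 e0 f0 : nat) : f0.+1 <= a0 + c0 -> b0 + a0 = n -> b0 = e0.+1 ->
  c0 <= d0.+1 -> d0 * 2 <= e0.+1 -> k < e0 -> 2 * n <= 3 * k + 2 -> f0 <= k.
Proof. lia. Qed.

Lemma count_walk k F u v pi p q : path (adj F) u pi -> last u pi = v ->
  uniq (u :: pi) -> k < size pi -> 2 * n <= 3 * k + 2 ->
  conn F p u -> conn F q u ->
  exists s, wk ([set u; v] |: F) p s q /\ size s <= k.
Proof.
move=> hp hl hu hk hn [s0 w0] [t0 wt0].
have Pu : u \in u :: pi by rewrite mem_head.
have [s1 [a [w1 Pa al]]] := first_hit (P := fun z => z \in u :: pi) w0 Pu.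
have [s2 [b [w2 Pb bl]]] := first_hit (P := fun z => z \in u :: pi) wt0 Pu.
have ia : nth u (u :: pi) (index a (u :: pi)) = a by rewrite nth_index.
have jb : nth u (u :: pi) (index b (u :: pi)) = b by rewrite nth_index.
have hi : index a (u :: pi) <= size pi by rewrite -ltnS; rewrite -[(size pi).+1]/(size (u :: pi)) index_mem.
have hj : index b (u :: pi) <= size pi by rewrite -ltnS; rewrite -[(size pi).+1]/(size (u :: pi)) index_mem.
have [r [wr sr subr]] := arc hp hl hi hj.
rewrite ia jb in wr subr.
have [s2' [w2' ss2' m2']] := wk_rev w2.
set F' := [set u; v] |: F.
have sub : {subset F <= F'} by move=> z hz; rewrite /F' in_setU1 hz orbT.
have W : wk F' p (s1 ++ (r ++ s2')) q.
  exact: (wk_cat (wk_sub sub w1) (wk_cat wr (wk_sub sub w2'))).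
have [s' [ws' us' subs' _]] := wk_short W.
exists s'; split => //.
set A := [set z | z \in u :: pi].
set S := ~: A :|: [set z | z \in a :: r].
have la : last p s1 = a by case/andP: w1 => _ /eqP.
have lb : last q s2 = b by case/andP: w2 => _ /eqP.
have lr : last a r = b by case/andP: wr => _ /eqP.
have subS : {subset p :: s' <= S}.
  move=> z hz.
  have {hz} : z \in (p :: s1) ++ (r ++ s2').
    move: hz; rewrite inE => /orP[/eqP->|/subs' hz]; first by rewrite mem_head.
    by rewrite cat_cons inE hz orbT.
  have hS1 : forall z, z \notin u :: pi -> z \in S.
    by move=> y hy; rewrite /S in_setU in_setC /A inE hy.
  have hS2 : forall z, z \in a :: r -> z \in S.
    by move=> y hy; rewrite /S in_setU inE hy orbT.
  rewrite !mem_cat => /orP[|/orP[hz|hz]].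
  - rewrite lastI la mem_rcons inE => /orP[/eqP->|hz]; first by apply: hS2; rewrite mem_head.
    by apply: hS1; rewrite (allP al z hz).
  - by apply: hS2; rewrite inE hz orbT.
  - have : z \in b :: s2' by rewrite inE hz orbT.
    rewrite m2' lastI lb mem_rcons inE => /orP[/eqP->|hz'].
      by apply: hS2; rewrite -lr mem_last.
    by apply: hS1; rewrite (allP bl z hz').
have c1 : (size s').+1 <= #|S|.
  have -> : (size s').+1 = #|p :: s'| by rewrite (card_uniqP us').
  by apply: subset_leq_card; apply/subsetP.
have c2 : #|S| <= #|~: A| + #|[set z | z \in a :: r]| by rewrite cardsU leq_subr.
have c3 : #|A| + #|~: A| = n by rewrite cardsC card_ord.
have c4 : #|A| = (size pi).+1 by rewrite /A cardsE (card_uniqP hu).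
have c5 : #|[set z | z \in a :: r]| <= (size r).+1 by rewrite cardsE card_size.
move: sr; rewrite -muln2 => sr.
exact: (arith_aux (leq_trans c1 c2) c3 c4 c5 sr hk hn).
Qed.

Definition SC k H f : Prop := exists p q,
  [/\ f = [set p; q], p != q & exists s, wk (H :\ f) p s q /\ size s <= k].

Lemma hit_e H e x y a s b : e = [set x; y] -> conn (H :\ e) y x ->
  wk H a s b -> ~~ path (adj (H :\ e)) a s -> conn (H :\ e) a x.
Proof.
move=> ee cyx /andP[p _] np.
case: (path_split e p) => [h|[s1 [c [s2 [_ p1 hg _]]]]].
  by rewrite h in np.
have c1 : conn (H :\ e) a (last a s1) by exists s1; rewrite /wk p1 eqxx.
have : last a s1 \in [set x; y] by rewrite -ee -hg setU11.
rewrite !inE => /orP[/eqP h|/eqP h]; rewrite h in c1; first exact: c1.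
exact: conn_trans c1 cyx.
Qed.

Lemma swap k G H e : 0 < k -> 2 * n <= 3 * k + 2 -> simple_graph G ->
  min_spanner k G H -> e \in H -> SC k H e ->
  exists H', min_spanner k G H' /\
    (forall f, f \in H' -> SC k H' f -> [/\ f \in H, SC k H f & f != e]).
Proof.
move=> k0 hn simG [spH minH] eH [x [y [ee xy [c [wc sc]]]]].
have subHG := proj1 spH.
have cyx : conn (H :\ e) y x by apply: conn_sym; exists c.
have nsp : ~ spanner k G (H :\ e).
  move=> sp; move: (minH _ sp); rewrite (cardsD1 e H) eH.
  by rewrite add1n ltnn.
have [u [v [guv nw]]] : exists u v, [set u; v] \in G /\
    ~ (exists s, wk (H :\ e) u s v /\ size s <= k).
  apply: NNPP => hne; apply: nsp; apply: spanner_of_edges.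
    apply/subsetP => z; rewrite in_setD1 => /andP[_ hz]; exact: (subsetP subHG).
  by move=> p q hpq; apply: NNPP => hn2; apply: hne; exists p, q.
have nw' : ~ (exists s, wk (H :\ e) v s u /\ size s <= k).
  move=> [s [ws ss]]; have [s' [ws' ss' _]] := wk_rev ws.
  by apply: nw; exists s'; rewrite ss'.
have nwb : forall b c s, [set b; c] = [set u; v] -> b != c ->
    wk (H :\ e) b s c -> size s <= k -> False.
  move=> b c0 s hbc bc ws ss.
  have hb : b \in [set u; v] by rewrite -hbc setU11.
  have hc : c0 \in [set u; v] by rewrite -hbc !inE eqxx orbT.
  move: hb hc bc ws; rewrite !inE => /orP[]/eqP-> /orP[]/eqP->.
  - by rewrite eqxx.
  - by move=> _ ws; apply: nw; exists s.
  - by move=> _ ws; apply: nw'; exists s.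
  - by rewrite eqxx.
have [s0 [ws0 ss0]] := spanner_edge spH guv.
have hitx : forall a s b, wk H a s b -> ~~ path (adj (H :\ e)) a s ->
    conn (H :\ e) a x.
  by move=> a s b; apply: hit_e ee cyx.
have cux : conn (H :\ e) u x.
  apply: (hitx _ _ _ ws0); apply/negP => hp; apply: nw; exists s0; split => //.
  by case/andP: ws0 => _ l; rewrite /wk hp l.
have cvx : conn (H :\ e) v x.
  have [s0' [ws0' ss0' _]] := wk_rev ws0.
  apply: (hitx _ _ _ ws0'); apply/negP => hp; apply: nw'; exists s0'.
  by split; [case/andP: ws0' => _ l; rewrite /wk hp l | rewrite ss0'].
have [pi0 wpi0] : conn (H :\ e) u v := conn_trans cux (conn_sym cvx).
have [pi [wpi upi _ _]] := wk_short wpi0.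
have hpi : k < size pi.
  by rewrite ltnNge; apply/negP => h; apply: nw; exists pi.
case/andP: wpi => ppi /eqP lpi.
set g := [set u; v].
have gn : g \notin H :\ e.
  apply/negP => hg; apply: nw; exists [:: v]; split => //; exact: wk_edge hg.
set H' := g |: (H :\ e).
have cH' : #|H'| = #|H| by rewrite /H' cardsU1 gn [in RHS](cardsD1 e H) eH.
have sub : {subset H :\ e <= H'} by move=> z hz; rewrite /H' in_setU1 hz orbT.
have sH' : spanner k G H'.
  apply: spanner_of_edges.
    apply/subsetP => z; rewrite /H' in_setU1 => /orP[/eqP->//|].
    rewrite in_setD1 => /andP[_ hz]; exact: (subsetP subHG).
  move=> p q hpq.
  case: (classic (exists s, wk (H :\ e) p s q /\ size s <= k)) => [[s [ws ss]]|hne].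
    by exists s; split => //; exact: wk_sub sub ws.
  have [s [ws ss]] := spanner_edge spH hpq.
  have cpx : conn (H :\ e) p x.
    apply: (hitx _ _ _ ws); apply/negP => hp; apply: hne; exists s; split => //.
    by case/andP: ws => _ l; rewrite /wk hp l.
  have [s' [ws' ss' _]] := wk_rev ws.
  have cqx : conn (H :\ e) q x.
    apply: (hitx _ _ _ ws'); apply/negP => hp; apply: hne.
    have wq : wk (H :\ e) q s' p by case/andP: ws' => _ l; rewrite /wk hp l.
    have [s'' [ws'' ss'' _]] := wk_rev wq.
    by exists s''; split => //; rewrite ss'' ss'.
  exact: (count_walk ppi lpi upi hpi hn (conn_trans cpx (conn_sym cux))
           (conn_trans cqx (conn_sym cux))).
exists H'; split.
  by split => // H'' sH''; rewrite cH'; exact: minH.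
move=> f fH' [p [q [ef pq [s [ws ss]]]]].
move: fH'; rewrite /H' in_setU1 => /orP[/eqP fg|].
  exfalso; rewrite fg in ef ws; rewrite /H' setU1K // in ws.
  exact: (nwb p q s (esym ef) pq ws ss).
rewrite in_setD1 => /andP[fe fH].
split => //.
exists p, q; split => //.
have [s' [ws' us' _ ss']] := wk_short ws.
case/andP: ws' => pw' /eqP lw'.
case: (path_split g pw') => [hp|[s1 [c0 [s2 [es hp1 hg hp2]]]]].
  exists s'; split; last exact: leq_trans ss' ss.
  rewrite /wk lw' eqxx andbT; apply: (sub_path _ hp) => z w.
  rewrite /adj !in_setD1 /H' in_setU1 in_setD1.
  case/and3P => h1 h2; rewrite h2 /= (negbTE h1) /=.
  by case/andP.
exfalso.
set b := last p s1.
have bn : b \notin c0 :: s2.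
  move: us'; rewrite es -cat_cons cat_uniq => /and3P[_ hd _].
  apply/negP => hb; apply: (negP hd); apply/hasP; exists b => //.
  exact: mem_last.
have bg : b \in g by rewrite -hg setU11.
have hp2' := path_avoid bg bn hp2.
have lq : last c0 s2 = q by rewrite -lw' es last_cat.
have sub2 : {subset (H' :\ f) :\ g <= H :\ e}.
  move=> z; rewrite !in_setD1 /H' in_setU1 => /and3P[h1 _].
  by rewrite (negbTE h1) /= in_setD1.
have w1 : wk (H :\ e) p s1 b by rewrite /wk eqxx andbT; apply: (sub_path _ hp1) => z w; exact: sub2.
have w2 : wk (H :\ e) c0 s2 q by rewrite /wk lq eqxx andbT; apply: (sub_path _ hp2') => z w; exact: sub2.
have [r1 [wr1 sr1 _]] := wk_rev w1.
have [r2 [wr2 sr2 _]] := wk_rev w2.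
have epq : adj (H :\ e) p q by rewrite /adj -ef in_setD1 fe fH.
have W := wk_cat wr1 (wk_cat (s := [:: q]) (wk_edge epq) wr2).
have bc : b != c0 by move: (simG _ guv); rewrite -/g -hg cards2; case: (b != c0).
apply: (nwb b c0 _ hg bc W).
rewrite size_cat /= sr1 sr2; apply: leq_trans ss.
by move: ss'; rewrite es size_cat.
Qed.

Lemma cycle_SC k H s : is_cycle H s -> size s <= k.+1 ->
  exists e, e \in H /\ SC k H e.
Proof.
case=> s3 us cs hs.
case: s s3 us cs hs => [|x [|y [|c t]]] //= _ us cs hs.
case/and3P: cs => hxy hyc hct.
move: us; rewrite !inE !negb_or => /andP[/and3P[nxy nxc nxt] /andP[/andP[nyc nyt] _]].
exists [set y; x]; split; first by rewrite setUC.
exists y, x; split => //; first by rewrite eq_sym.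
exists (c :: rcons t x); split; last by rewrite /= size_rcons.
rewrite /wk /= last_rcons eqxx andbT.
apply/andP; split.
  rewrite /adj in_setD1 andbC; move: hyc; rewrite /adj => ->; rewrite /=.
  apply/eqP => eq; have : c \in [set y; x] by rewrite -eq !inE eqxx orbT.
  by rewrite !inE eq_sym (negbTE nyc) eq_sym (negbTE nxc).
apply: (path_avoid (b := y)); first by rewrite !inE eqxx.
  by rewrite inE mem_rcons inE !negb_or nyc nyt andbT eq_sym.
exact: hct.
Qed.

Lemma loop k G : 0 < k -> 2 * n <= 3 * k + 2 -> simple_graph G ->
  forall m H (B : {set {set 'I_n}}), min_spanner k G H -> #|B| <= m ->
  (forall f, f \in H -> SC k H f -> f \in B) ->
  exists H, min_spanner k G H /\ girth_ge H k.+2.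
Proof.
move=> k0 hn simG; elim=> [|m IH] H B mH cB hB;
  (case: (classic (girth_ge H k.+2)) => [hg|hg]; first by exists H);
  (have [s [cs ss]] : exists s, is_cycle H s /\ size s <= k.+1 by
    apply: NNPP => hne; apply: hg => s cs; rewrite leqNgt; apply/negP => h;
    apply: hne; exists s);
  have [e [eH sce]] := cycle_SC cs ss;
  have eB := hB e eH sce.
  by move: cB; rewrite leqn0 cards_eq0 => /eqP B0; rewrite B0 inE in eB.
have [H' [mH' hH']] := swap k0 hn simG mH eH sce.
apply: (IH H' (B :\ e)) => //.
  by move: cB; rewrite (cardsD1 e B) eB.
move=> f hf hsc; case: (hH' f hf hsc) => fH scf fe.
by rewrite in_setD1 fe hB.
Qed.

Lemma good_of k : 0 < k -> 2 * n <= 3 * k + 2 -> good n k.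
Proof.
move=> k0 hn G simG; have [H mH] := exists_min G k0.
exact: (loop k0 hn simG (m := #|H|) (B := H) mH (leqnn _)).
Qed.

End G.

From mathcomp Require Import ring lra.
Import GRing.Theory Num.Theory.
Local Open Scope ring_scope.

Theorem corollary1p10 :
  exists c : rat, exists N : nat, forall n : nat, (N <= n)%N ->
    forall k : nat, 2%:R / 3%:R * n%:R + c < k%:R -> good n k.
Proof.
exists 0, 0%N => n _ k; rewrite addr0 => h.
have h2 : (2 * n < 3 * k)%N.
  rewrite -(ltr_nat rat) !natrM.
  have -> : (2%:R : rat) * n%:R = 3%:R * (2%:R / 3%:R * n%:R) by field.
  by rewrite ltr_pM2l.
apply: good_of; lia.
Qed.
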